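(* Let $f_\bullet\colon X\to Z$ be a set mapping between finite metric spaces, $V=\mathrm{PH}_0(X)$, $U=\mathrm{PH}_0(Z)$, $f_0\colon V_0\to U_0$ the induced linear map, and set $A^\pm=f_0(\ker^\pm_a(V))$ and $B^\pm=\ker^\pm_b(U)$. Then for all $a\in S^V$ and $b\in S^U$, $$\mathcal{M}^0_f(a,b)=\dim\left(\frac{A^++B^-}{A^-+B^-}\cap\frac{A^-+B^+}{A^-+B^-}\right),$$ where both quotients are regarded as subspaces of $U_0/(A^-+B^-)$.
   Context: All vector spaces are over $\mathbb{Z}_2$. For a finite metric space $(X,d^X)$ and $r\ge 0$, $\mathrm{VR}_r(X)$ is the graph on $X$ with edges $[x,y]$ whenever $d^X(x,y)\le r$; $\mathrm{PH}_0(X)$ is the persistence module $r\mapsto H_0(\mathrm{VR}_r(X))$ (vector space freely generated by connected components) with structure maps $\rho_{rs}$ induced by inclusion, so $\mathrm{PH}_0(X)_0$ has basis $X$. Its barcode is the multiset $(S^V,m^V)$ of finite death values $b>0$ of the bars $[0,b)$ in its interval decomposition (infinite bar excluded). For a persistence module $U$ and $b>0$: $\ker^+_b(U)=\ker(\rho^U_{0b})$, $\ker^-_b(U)=\bigcup_{0\le r<b}\ker(\rho^U_{0r})$. The linear map $f_0$ sends basis element $x$ to $f_\bullet(x)$. The block function is $\mathcal{M}^0_f(a,b)=\dim\frac{f_0(\ker^+_a V)\cap \ker^+_b U}{f_0(\ker^-_a V)\cap\ker^+_b U+f_0(\ker^+_a V)\cap \ker^-_b U}$. *)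

(* Defs.v *)
From HB Require Import structures.
From mathcomp Require Import all_boot all_order all_algebra.
From mathcomp Require Import boolp.
Set Implicit Arguments. Unset Strict Implicit. Unset Printing Implicit Defensive.
Import Order.TTheory GRing.Theory Num.Theory.
Local Open Scope ring_scope.

Definition is_metric (R : realFieldType) (X : finType) (d : X -> X -> R) : Prop :=
  [/\ forall x, d x x = 0,
      forall x y, x != y -> 0 < d x y,
      forall x y, d x y = d y x &
      forall x y z, d x z <= d x y + d y z].

Notation F2 := ('F_2)%type.

Definition V0 (X : finType) := {ffun X -> F2^o}.

(* H_0(VR_r(X)) : vector space freely generated by the connected components,
   realised inside the vector space with basis {set X} *)
Definition H0space (X : finType) := {ffun {set X} -> F2^o}.

Section PH0.
Variables (R : realFieldType) (X : finType) (d : X -> X -> R).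

Definition VRedge (r : R) : rel X := fun x y => d x y <= r.

Definition comp (r : R) (x : X) : {set X} := [set y | connect (VRedge r) x y].

Definition hbasis (C : {set X}) : H0space X := [ffun D => if D == C then 1 else 0].

Definition rho0_fun (r : R) (v : V0 X) : H0space X :=
  \sum_(x : X) v x *: hbasis (comp r x).

Definition rho0 (r : R) : 'Hom(V0 X, H0space X) := linfun (rho0_fun r).

Definition kerp (b : R) : {vspace V0 X} := lker (rho0 b).

(* ker^-_b = union_{0 <= r < b} ker rho_{0r}; this nested union of subspaces is
   a subspace, represented here as the span of the union *)
Definition in_kerm (b : R) (v : V0 X) : bool :=
  `[< exists r : R, (0 <= r) /\ (r < b) /\ (v \in kerp r) >].

Definition kerm (b : R) : {vspace V0 X} :=
  span [seq v <- enum (V0 X) | in_kerm b v].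

(* death values of the finite bars of PH_0(X): b > 0 and the multiplicity
   m(b) = dim ker^+_b - dim ker^-_b is positive *)
Definition deathset (b : R) : Prop := 0 < b /\ (\dim (kerm b) < \dim (kerp b))%N.
End PH0.

Definition f0_fun (X Z : finType) (f : X -> Z) (v : V0 X) : V0 Z :=
  [ffun z => \sum_(x | f x == z) v x].
Definition f0 (X Z : finType) (f : X -> Z) : 'Hom(V0 X, V0 Z) := linfun (f0_fun f).

(* dimension of a quotient N / D of subspaces with D <= N *)
Definition qdim (K : fieldType) (vT : vectType K) (N D : {vspace vT}) : nat :=
  (\dim N - \dim D)%N.

Definition blockM (R : realFieldType) (X Z : finType) (dX : X -> X -> R)
  (dZ : Z -> Z -> R) (f : X -> Z) (a b : R) : nat :=
  qdim ((f0 f @: kerp dX a) :&: kerp dZ b)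
       ((f0 f @: kerm dX a) :&: kerp dZ b + (f0 f @: kerp dX a) :&: kerm dZ b)%VS.

(* Main.v *)
Require Import Defs.
From HB Require Import structures.
From mathcomp Require Import all_boot all_order all_algebra.
From mathcomp Require Import boolp zify.
Import Order.TTheory GRing.Theory Num.Theory.
Local Open Scope ring_scope.

Section Abs.
Variables (K : fieldType) (vT wT : vectType K).
Implicit Types A B C : {vspace vT}.

Lemma modv A B C : (A <= C)%VS -> ((A + B) :&: C = A + (B :&: C))%VS.
Proof.
move=> AC; apply/eqP; rewrite eqEsubv; apply/andP; split.
  apply/subvP => w; rewrite memv_cap => /andP[/memv_addP[u uA [v vB ->]] wC].
  apply: memv_add => //; rewrite memv_cap vB /=.
  have -> : v = (u + v) - u by rewrite addrC addKr.
  by rewrite memvB // (subvP AC).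
rewrite subv_add subv_cap addvSl AC /= subv_cap (subv_trans (capvSl _ _) (addvSr _ _)).
exact: capvSr.
Qed.

Lemma absM (Am Ap : {vspace vT}) (Bm Bp : {vspace vT}) (q : 'Hom(vT, wT)) :
  (Am <= Ap)%VS -> (Bm <= Bp)%VS -> lker q = (Am + Bm)%VS ->
  (\dim (Ap :&: Bp) - \dim (Am :&: Bp + Ap :&: Bm))%N =
  \dim ((q @: (Ap + Bm)) :&: (q @: (Am + Bp)))%VS.
Proof.
move=> sA sB hq.
set P := (Ap + Bm)%VS; set Q := (Am + Bp)%VS; set Kq := (Am + Bm)%VS.
have KP : (Kq <= P)%VS by apply: addvS.
have KQ : (Kq <= Q)%VS by apply: addvS.
have dimq S : (Kq <= S)%VS -> \dim (q @: S) = (\dim S - \dim Kq)%N.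
  move=> KS; have := limg_ker_dim q S; rewrite hq (capv_idPr KS); lia.
have e1 := dimv_sum_cap (q @: P) (q @: Q).
rewrite -limgD in e1.
have e2 := dimv_sum_cap P Q.
have KPQ : (Kq <= P + Q)%VS by apply: (subv_trans KP); apply: addvSl.
rewrite (dimq _ KP) (dimq _ KQ) (dimq _ KPQ) in e1.
have PQ : (P :&: Q = Kq + Ap :&: Bp)%VS.
  rewrite /P /Q /Kq capvC modv; last by apply: (subv_trans sA); apply: addvSl.
  by rewrite [(Bp :&: _)%VS]capvC [(Ap + Bm)%VS]addvC modv // addvA.
have D : (Am :&: Bp + Ap :&: Bm = Kq :&: (Ap :&: Bp))%VS.
  have h1 : (Bm :&: Ap <= Bp)%VS by apply: (subv_trans (capvSl _ _)).
  rewrite capvA /Kq (modv Am Bm Ap sA) [(Am + _)%VS]addvC (modv (Bm :&: Ap) Am Bp h1).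
  by rewrite addvC capvC.
have e3 := dimv_sum_cap Kq (Ap :&: Bp).
rewrite -PQ -D in e3.
have : (\dim (Kq :&: (Ap :&: Bp)) <= \dim Kq)%N by apply: dimvS; apply: capvSl.
have : (\dim Kq <= \dim (P :&: Q))%N by apply: dimvS; rewrite subv_cap KP.
have : (\dim Kq <= \dim (P + Q))%N by apply: dimvS.
have : (\dim Kq <= \dim P)%N by apply: dimvS.
have : (\dim Kq <= \dim Q)%N by apply: dimvS.
rewrite -D; lia.
Qed.
End Abs.

Section Conc.
Variables (R : realFieldType) (X : finType) (d : X -> X -> R).

Lemma rho0_lin r : linear (rho0_fun d r).
Proof.
move=> c u v; rewrite /rho0_fun scaler_sumr -big_split /=.
by apply: eq_bigr => x _; rewrite !ffunE scalerDl scalerA.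
Qed.

HB.instance Definition _ r := GRing.isLinear.Build F2 (V0 X) (H0space X) _ (rho0_fun d r) (rho0_lin r).

Lemma rho0E r v : rho0 d r v = rho0_fun d r v.
Proof. by rewrite lfunE. Qed.

Lemma rho0_at r v D : rho0 d r v D = \sum_(x | Defs.comp d r x == D) v x.
Proof.
rewrite rho0E /rho0_fun sum_ffunE (bigID (fun x => Defs.comp d r x == D)) /=.
rewrite [X in _ + X]big1 ?addr0; last first.
  by move=> x /negbTE h; rewrite !ffunE eq_sym h scaler0.
by apply: eq_bigr => x /eqP ->; rewrite !ffunE eqxx; exact: mulr1.
Qed.

Lemma comp_inv r a x y : r <= a -> Defs.comp d r x = Defs.comp d r y -> Defs.comp d a x = Defs.comp d a y.
Proof.
move=> ra e.
have sub : subrel (connect (VRedge d r)) (connect (VRedge d a)).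
  apply: connect_sub => u w h; apply: connect1; exact: le_trans h ra.
have cxy : connect (VRedge d r) x y.
  have : y \in Defs.comp d r y by rewrite inE connect0.
  by rewrite -e inE.
have cyx : connect (VRedge d r) y x.
  have : x \in Defs.comp d r x by rewrite inE connect0.
  by rewrite e inE.
apply/setP => z; rewrite !inE; apply/idP/idP => h.
  exact: connect_trans (sub _ _ cyx) h.
exact: connect_trans (sub _ _ cxy) h.
Qed.

Lemma kerp_mono r a : r <= a -> (kerp d r <= kerp d a)%VS.
Proof.
move=> ra; apply/subvP => v; rewrite /kerp => hv.
have /eqP h0 : rho0 d r v == 0 by rewrite -memv_ker.
have e := memv_ker (rho0 d a) v.
suff : rho0 d a v == 0 by move=> /idP; rewrite -e.
apply/eqP.
apply/ffunP => D; rewrite rho0_at ffunE.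
rewrite (partition_big (Defs.comp d r)
   (fun C => [exists y, (Defs.comp d r y == C) && (Defs.comp d a y == D)])) /=.
  apply: big1 => C /existsP[y /andP[/eqP eC /eqP eD]].
  have := congr1 (fun g : H0space X => g C) h0; rewrite /= rho0_at ffunE => hC; apply: etrans _ hC.
  apply: eq_bigl => x; apply/andP/idP => [[_ //]|ex]; split => //.
  by rewrite (comp_inv _ _ _ _ ra (etrans (eqP ex) (esym eC))) eD.
by move=> x hx; apply/existsP; exists x; rewrite eqxx.
Qed.

Lemma kerm_sub a : (kerm d a <= kerp d a)%VS.
Proof.
apply/span_subvP => v; rewrite mem_filter => /andP[/asboolP[r [_ [ra hv]]] _].
exact: (subvP (kerp_mono _ _ (ltW ra))).
Qed.
End Conc.

Theorem lemma3p4 (R : realFieldType) (X Z : finType)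
  (dX : X -> X -> R) (dZ : Z -> Z -> R) (f : X -> Z)
  (hX : is_metric dX) (hZ : is_metric dZ) (a b : R)
  (ha : deathset dX a) (hb : deathset dZ b)
  (W : vectType F2) (q : 'Hom(V0 Z, W))
  (hq : lker q = ((f0 f @: kerm dX a) + kerm dZ b)%VS) :
  blockM dX dZ f a b =
  \dim ((q @: ((f0 f @: kerp dX a) + kerm dZ b)) :&:
        (q @: ((f0 f @: kerm dX a) + kerp dZ b)))%VS.
Proof.
rewrite /blockM /qdim; apply: absM => //.
  by apply: limgS; apply: kerm_sub.
exact: kerm_sub.
Qed.
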